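(* Let $\langle M,\mathsf{S}\rangle$ be a sum structure with $M\neq\emptyset$. Then the relation $\sqsubseteq_{\mathsf{S}}$ satisfies the parthood axioms (P1)–(P5), i.e. $\langle M,\sqsubseteq_{\mathsf{S}}\rangle$ is a mereological structure.
   Context: For a set $M$ and a relation $\mathsf{S}\subseteq M\times\mathcal{P}(M)$ define: $x\sqsubseteq_{\mathsf{S}} y$ iff there is $X\subseteq M$ with $y\,\mathsf{S}\,X$ and $x\in X$; $\mathrm{I}(x)=\{y\in M\mid y\sqsubseteq_{\mathsf{S}} x\}$ and for $A\subseteq M$, $\mathrm{I}(A)=\bigcup_{a\in A}\mathrm{I}(a)$; $x$ s-overlaps $y$ iff there are $X,Y\subseteq M$ with $x\,\mathsf{S}\,X$, $y\,\mathsf{S}\,Y$, $X\cap Y\neq\emptyset$; a set $A\subseteq M$ is pre-dense in $B\subseteq M$ iff for every $b\in B$ there is $a\in A$ such that $a$ s-overlaps $b$. A sum structure is a pair $\langle M,\mathsf{S}\rangle$ satisfying: (S1) for every non-empty $X\subseteq M$ there is $x\in M$ with $x\,\mathsf{S}\,X$; (S2) $x\,\mathsf{S}\,X\wedge y\,\mathsf{S}\,X\to x=y$; (S3) $x\,\mathsf{S}\,X\wedge y\,\mathsf{S}\,Y\wedge x\in Y\to y\,\mathsf{S}\,(X\cup Y)$; (S4) if $x\,\mathsf{S}\,X$, $x\,\mathsf{S}\,Y$ and $y\in Y$, then there are $z\in X$ and $Z,U\subseteq M$ with $z\,\mathsf{S}\,Z$, $y\,\mathsf{S}\,U$ and $Z\cap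 U\neq\emptyset$; (S5) for all $x\in M$ and $X\subseteq M$: if $X$ is pre-dense in $\mathrm{I}(x)$ then $x\,\mathsf{S}\,(\mathrm{I}(x)\cap\mathrm{I}(X))$. A mereological structure is a pair $\langle M,\sqsubseteq\rangle$ where $M$ is a non-empty set and $\sqsubseteq\subseteq M\times M$ satisfies, for all $x,y,z\in M$: (P1) $x\sqsubseteq x$; (P2) $x\sqsubseteq y\wedge y\sqsubseteq x\to x=y$; (P3) $x\sqsubseteq y\wedge y\sqsubseteq z\to x\sqsubseteq z$; (P4) if $x\not\sqsubseteq y$ then there is $z\in M$ with $z\sqsubseteq x$ such that there is no $u\in M$ with $u\sqsubseteq z$ and $u\sqsubseteq y$; (P5) for every non-empty $X\subseteq M$ there is $x\in M$ such that every $y\in X$ satisfies $y\sqsubseteq x$, and for every $a\in M$ with $a\sqsubseteq x$ there exist $y\in X$ and $z\in M$ with $z\sqsubseteq y$ and $z\sqsubseteq a$. *)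

(* Defs.v *)
Set Implicit Arguments.

Section SumStr.
Variable M : Type.
Variable S : M -> (M -> Prop) -> Prop.

Definition sle (x y : M) : Prop := exists X : M -> Prop, S y X /\ X x.

Definition I1 (x : M) : M -> Prop := fun y => sle y x.

Definition IA (A : M -> Prop) : M -> Prop := fun y => exists a, A a /\ I1 a y.

Definition s_overlaps (x y : M) : Prop :=
  exists X Y : M -> Prop, S x X /\ S y Y /\ exists z, X z /\ Y z.

Definition pre_dense (A B : M -> Prop) : Prop :=
  forall b, B b -> exists a, A a /\ s_overlaps a b.

End SumStr.

Definition sum_structure (M : Type) (S : M -> (M -> Prop) -> Prop) : Prop :=
  (forall X : M -> Prop, (exists z, X z) -> exists x, S x X) /\
  (forall x y X, S x X -> S y X -> x = y) /\
  (forall x y X Y, S x X -> S y Y -> Y x -> S y (fun z => X z \/ Y z)) /\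
  (forall x X Y y, S x X -> S x Y -> Y y ->
              exists z, X z /\ exists Z U : M -> Prop, S z Z /\ S y U /\ exists w, Z w /\ U w) /\
  (forall x (X : M -> Prop), pre_dense S X (I1 S x) ->
              S x (fun z => I1 S x z /\ IA S X z)).

Definition mereological_structure (M : Type) (P : M -> M -> Prop) : Prop :=
  inhabited M /\
  (forall x, P x x) /\
  (forall x y, P x y -> P y x -> x = y) /\
  (forall x y z, P x y -> P y z -> P x z) /\
  (forall x y, ~ P x y -> exists z, P z x /\ ~ exists u, P u z /\ P u y) /\
  (forall X : M -> Prop, (exists z, X z) ->
              exists x, (forall y, X y -> P y x) /\
                (forall a, P a x -> exists y z, X y /\ P z y /\ P z a)).

(* Main.v *)
Require Import Defs.
From Stdlib Require Import FunctionalExtensionality PropExtensionality Classical.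

Section Pf.
Variable M : Type.
Variable S : M -> (M -> Prop) -> Prop.
Hypothesis HS : sum_structure S.

Lemma S_ext x X Y : S x X -> (forall z, X z <-> Y z) -> S x Y.
Proof.
  intros H E. replace Y with X; auto.
  apply functional_extensionality; intro z; apply propositional_extensionality; auto.
Qed.

Lemma tr x y z : sle S x y -> sle S y z -> sle S x z.
Proof.
  destruct HS as [S1 [S2 [S3 [S4 S5]]]].
  intros [X [HX Hx]] [Y [HY Hy]].
  exists (fun w => X w \/ Y w). split; auto. eapply S3; eauto.
Qed.

Lemma SI_c x : exists c, S c (fun z => z = x) /\ S x (I1 S x) /\ S c (I1 S x).
Proof.
  destruct HS as [S1 [S2 [S3 [S4 S5]]]].
  destruct (S1 (fun z => z = x)) as [c Hc]; [eauto|].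
  exists c; split; auto. split.
  - assert (PD : pre_dense S (fun z => z = x) (I1 S x)).
    { intros b [Bx [HBx Hb]].
      assert (H3 := S3 x c Bx (fun z => z = x) HBx Hc eq_refl).
      destruct (S4 c (fun z => z = x) _ b Hc H3 (or_introl Hb)) as [z [Hz Ov]].
      subst z. exists x; split; auto. }
    eapply S_ext; [exact (S5 x _ PD)|]. intro z; split.
    + intros [H _]; exact H.
    + intro H; split; auto. exists x; split; auto.
  - assert (PD : pre_dense S (fun z => z = x) (I1 S c)).
    { intros b [Bc [HBc Hb]].
      destruct (S4 c (fun z => z = x) _ b Hc HBc Hb) as [z [Hz Ov]].
      subst z. exists x; split; auto. }
    eapply S_ext; [exact (S5 c _ PD)|]. intro z; split.
    + intros [_ [a [Ha H]]]. subst a. exact H.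
    + intro H; split.
      * eapply tr; eauto. exists (fun z => z = x); auto.
      * exists x; split; auto.
Qed.

Lemma SI x : S x (I1 S x).
Proof. destruct (SI_c x) as [c [_ [H _]]]; exact H. Qed.

Lemma refl x : sle S x x.
Proof.
  destruct HS as [S1 [S2 [S3 [S4 S5]]]].
  destruct (SI_c x) as [c [Hc [H1 H2]]].
  rewrite (S2 _ _ _ H1 H2) at 2. exists (fun z => z = x); auto.
Qed.

Lemma overlap_of u a b : sle S u a -> sle S u b -> s_overlaps S a b.
Proof.
  intros Ha Hb. exists (I1 S a), (I1 S b). split; [apply SI|]. split; [apply SI|].
  exists u; split; auto.
Qed.

End Pf.

Theorem theorem3p13 (M : Type) (S : M -> (M -> Prop) -> Prop) :
  inhabited M -> sum_structure S -> mereological_structure (sle S).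
Proof.
  intros Hin HS. pose proof HS as HS'.
  destruct HS' as [S1 [S2 [S3 [S4 S5]]]].
  split; [exact Hin|]. split; [intro; apply (@refl M S HS)|]. split; [|split; [|split]].
  - intros x y Hxy Hyx.
    apply (S2 x y (I1 S x)); [apply SI; auto|].
    eapply S_ext; [exact (@SI M S HS y)|]. intro z; split; intro H; eapply tr; eauto.
  - intros x y z; apply tr; auto.
  - intros x y Hn.
    apply Classical_Prop.NNPP; intro Hc. apply Hn.
    assert (Hall : forall z, sle S z x -> exists u, sle S u z /\ sle S u y).
    { intros z Hz. apply Classical_Prop.NNPP; intro H. apply Hc. exists z; split; auto. }
    destruct (S1 (fun z => z = x \/ z = y)) as [e He]; [eauto|].
    assert (PD : pre_dense S (fun z => z = y) (I1 S e)).
    { intros b [B [HB Hb]].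
      destruct (S4 e _ _ b He HB Hb) as [z [[Hz|Hz] [Z [U [HZ [HU [w [Zw Uw]]]]]]]]; subst z.
      - assert (wx : sle S w x) by (exists Z; auto).
        destruct (Hall w wx) as [u [uw uy]].
        exists y; split; auto. apply (@overlap_of M S HS u); auto.
        apply (@tr M S HS u w b); [exact uw|]. exists U; auto.
      - exists y; split; auto. exists Z, U. split; [auto|]. split; [auto|]. exists w; auto. }
    assert (E : e = y).
    { apply (S2 e y (I1 S y)); [|apply SI; auto].
      eapply S_ext; [exact (S5 e _ PD)|]. intro z; split.
      + intros [_ [a [Ha H]]]; subst a; exact H.
      + intro H; split.
        * eapply tr; eauto. exists (fun z => z = x \/ z = y); auto.
        * exists y; auto. }
    subst e. exists (fun z => z = x \/ z = y); auto.
  - intros X [z0 Hz0].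
    destruct (S1 X) as [x Hx]; [eauto|].
    exists x; split.
    + intros y Hy; exists X; auto.
    + intros a [A [HA Ha]].
      destruct (S4 x X A a Hx HA Ha) as [z [Hz [Z [U [HZ [HU [w [Zw Uw]]]]]]]].
      exists z, w; split; auto. split; [exists Z|exists U]; auto.
Qed.
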